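(* Let $k\ge1$ and let $A_1,\dots,A_n$ be independent events with probabilities $1\ge u_1\ge u_2\ge\dots\ge u_n\ge0$. Then \[ \mathbf{P}\big(\{A_i\}_{i=1}^n\text{ has no }k\text{-gaps}\big)\;\le\;\prod_{i=1}^{n-k+1}f_k(1-u_i), \] an empty product being $1$.
   Context: For an integer $k\ge1$, $f_k:[0,1]\to[0,1]$ denotes the unique decreasing function satisfying $f_k(x)^k-f_k(x)^{k+1}=x^k-x^{k+1}$ for all $x\in[0,1]$; it is continuous with $f_k(0)=1$, $f_k(1)=0$. A sequence of events $A_1,\dots,A_n$ has a $k$-gap if there is an index $i$ with $i+k-1\le n$ such that none of $A_i,\dots,A_{i+k-1}$ occurs. *)

(* Defs.v *)
From Stdlib Require Import Reals List Arith.
Import ListNotations.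
Open Scope R_scope.

(* All outcomes (omega_0,...,omega_{n-1}) in {true,false}^n; omega_i = true
   means that the event A_{i+1} occurs. *)
Fixpoint bool_lists (n : nat) : list (list bool) :=
  match n with
  | O => [nil]
  | S m => map (cons true) (bool_lists m) ++ map (cons false) (bool_lists m)
  end.

(* Probability of the outcome w under the product law of independent events
   with P(A_{i+1}) = u i, starting at index i. *)
Fixpoint weight_from (u : nat -> R) (i : nat) (w : list bool) : R :=
  match w with
  | nil => 1
  | b :: t => (if b then u i else 1 - u i) * weight_from u (S i) t
  end.

(* w has a k-gap: some window of k consecutive positions i..i+k-1
   (with i + k <= length w) in which no event occurs. *)
Definition kgapb (k : nat) (w : list bool) : bool :=
  existsb (fun i => forallb (fun j => negb (nth j w true)) (seq i k))
          (seq 0 (S (length w) - k)).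

Definition prob_no_kgap (k n : nat) (u : nat -> R) : R :=
  fold_right Rplus 0
    (map (fun w => if kgapb k w then 0 else weight_from u 0 w) (bool_lists n)).

(* prod_{i=1}^{n-k+1} f(1 - u_i)  (0-based: i = 0 .. n-k), empty product = 1. *)
Definition gap_bound (f : R -> R) (k n : nat) (u : nat -> R) : R :=
  fold_right Rmult 1 (map (fun i => f (1 - u i)) (seq 0 (S n - k))).

(* Main.v *)
Require Import Defs.
From Stdlib Require Import Reals List Arith Lia Lra Psatz.
Import ListNotations.
Open Scope R_scope.

Definition sumL (F : list bool -> R) (L : nat) : R :=
  fold_right Rplus 0 (map F (bool_lists L)).

Lemma fold_plus_app : forall l1 l2, fold_right Rplus 0 (l1 ++ l2) = fold_right Rplus 0 l1 + fold_right Rplus 0 l2.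
Proof. induction l1; intros; simpl; [ring| rewrite IHl1; ring]. Qed.

Lemma sumL_S : forall F L, sumL F (S L) = sumL (fun w => F (true :: w)) L + sumL (fun w => F (false :: w)) L.
Proof. intros. unfold sumL. simpl. rewrite map_app, fold_plus_app, !map_map. reflexivity. Qed.

Lemma sumL_0 : forall F, sumL F 0 = F nil.
Proof. intros; unfold sumL; simpl; ring. Qed.

Lemma sumL_ext : forall L F G, (forall w, length w = L -> F w = G w) -> sumL F L = sumL G L.
Proof. induction L; intros F G H. rewrite !sumL_0; apply H; reflexivity.
 rewrite !sumL_S. f_equal; apply IHL; intros w Hw; apply H; simpl; lia. Qed.

Lemma sumL_scal : forall L a F, sumL (fun w => a * F w) L = a * sumL F L.
Proof. induction L; intros. rewrite !sumL_0; ring.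
 rewrite !sumL_S. rewrite (IHL a (fun w => F (true :: w))), (IHL a (fun w => F (false :: w))). ring. Qed.

Lemma sumL_zero : forall L, sumL (fun _ => 0) L = 0.
Proof. induction L. rewrite sumL_0; ring. rewrite sumL_S, IHL; ring. Qed.

Lemma sumL_snoc : forall L F, sumL F (S L) = sumL (fun w => F (w ++ [true])) L + sumL (fun w => F (w ++ [false])) L.
Proof. induction L; intros F.
 - rewrite sumL_S, !sumL_0. reflexivity.
 - rewrite sumL_S. rewrite (IHL (fun w => F (true :: w))), (IHL (fun w => F (false :: w))).
   rewrite (sumL_S (fun w => F (w ++ [true]))), (sumL_S (fun w => F (w ++ [false]))). simpl. ring.
Qed.

Lemma sumL_rev : forall L F, sumL F L = sumL (fun w => F (rev w)) L.
Proof. induction L; intros F.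
 - rewrite !sumL_0. reflexivity.
 - rewrite sumL_S, sumL_snoc. rewrite (IHL (fun w => F (true :: w))), (IHL (fun w => F (false :: w))).
   f_equal; apply sumL_ext; intros w _; cbv beta; rewrite rev_unit; reflexivity.
Qed.

Fixpoint gs (k c : nat) (w : list bool) : bool :=
  match w with
  | nil => false
  | true :: t => gs k 0 t
  | false :: t => if Nat.leb k (S c) then true else gs k (S c) t
  end.

Definition win (w : list bool) (k : nat) : Prop :=
  exists i, forall j, (i <= j < i + k)%nat -> nth j w true = false.

Lemma nth_rep_app : forall c j t d, nth j (repeat false c ++ t) d = if (j <? c)%nat then false else nth (j - c) t d.
Proof. induction c; intros; simpl.
 - rewrite Nat.sub_0_r. reflexivity.
 - destruct j; simpl. reflexivity. rewrite IHc. reflexivity. Qed.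

Lemma rep_shift : forall (c:nat) (t : list bool), repeat false c ++ false :: t = repeat false (S c) ++ t.
Proof. induction c; simpl; intros; [reflexivity| rewrite IHc; reflexivity]. Qed.

Lemma gs_win : forall k w c, (c < k)%nat -> (gs k c w = true <-> win (repeat false c ++ w) k).
Proof. intros k w. induction w as [|a w IHw]; intros c Hc.
 - simpl. split; [discriminate|]. intros [i Hi]. specialize (Hi (i + k - 1)%nat ltac:(lia)).
   rewrite nth_rep_app in Hi. destruct (Nat.ltb_spec (i+k-1) c). lia.
   destruct (i + k - 1 - c)%nat; simpl in Hi; discriminate.
 - destruct a.
   + simpl. rewrite (IHw 0%nat ltac:(lia)). simpl. split.
     * intros [i Hi]. exists (i + S c)%nat. intros j Hj. rewrite nth_rep_app.
       destruct (Nat.ltb_spec j c); [lia|]. replace (j - c)%nat with (S (j - S c)) by lia. simpl. apply Hi. lia.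
     * intros [i Hi]. assert (Hic : (c < i)%nat).
       { destruct (Nat.lt_ge_cases c i) as [H|H]; auto. specialize (Hi c ltac:(lia)).
         rewrite nth_rep_app, Nat.ltb_irrefl, Nat.sub_diag in Hi. simpl in Hi. discriminate. }
       exists (i - S c)%nat. intros j Hj. specialize (Hi (j + S c)%nat ltac:(lia)).
       rewrite nth_rep_app in Hi. destruct (Nat.ltb_spec (j + S c) c); [lia|].
       replace (j + S c - c)%nat with (S j) in Hi by lia. simpl in Hi. exact Hi.
   + simpl. rewrite rep_shift. destruct (Nat.leb_spec k (S c)).
     * split; intros _; [|reflexivity]. exists 0%nat. intros j Hj. rewrite nth_rep_app.
       destruct (Nat.ltb_spec j (S c)); [reflexivity|lia].
     * apply IHw. lia.
Qed.

Lemma kgapb_win : forall k w, (1 <= k)%nat -> (kgapb k w = true <-> win w k).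
Proof. intros k w Hk. unfold kgapb, win. rewrite existsb_exists. split.
 - intros [i [Hin Hf]]. exists i. intros j Hj. rewrite forallb_forall in Hf. specialize (Hf j).
   rewrite in_seq in Hf. specialize (Hf ltac:(lia)). destruct (nth j w true); simpl in Hf; congruence.
 - intros [i Hi]. exists i. split.
   + apply in_seq. assert (H : (i + k - 1 < length w)%nat).
     { destruct (Nat.lt_ge_cases (i + k - 1) (length w)) as [H|H]; auto.
       specialize (Hi (i+k-1)%nat ltac:(lia)). rewrite nth_overflow in Hi by exact H. discriminate. }
     lia.
   + apply forallb_forall. intros j Hj. rewrite in_seq in Hj. rewrite Hi by lia. reflexivity.
Qed.

Lemma kgapb_gs : forall k w, (1 <= k)%nat -> kgapb k w = gs k 0 w.
Proof. intros. apply Bool.eq_iff_eq_true. rewrite kgapb_win by auto. rewrite (gs_win k w 0) by lia.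
 simpl. reflexivity. Qed.

Lemma win_rev : forall k w, win w k -> win (rev w) k.
Proof. intros k w [i Hi].
 assert (Hlt : forall j, (i <= j < i + k)%nat -> (j < length w)%nat).
 { intros j Hj. destruct (Nat.lt_ge_cases j (length w)); auto. specialize (Hi j Hj).
   rewrite nth_overflow in Hi by auto. discriminate. }
 destruct k as [|k'].
 - exists 0%nat; intros; lia.
 - assert (i + S k' <= length w)%nat by (specialize (Hlt (i + k')%nat ltac:(lia)); lia).
   exists (length w - (i + S k'))%nat. intros j Hj. rewrite rev_nth by lia. apply Hi. lia.
Qed.

Lemma kgapb_rev : forall k w, (1 <= k)%nat -> kgapb k (rev w) = kgapb k w.
Proof. intros k w Hk. apply Bool.eq_iff_eq_true. rewrite !kgapb_win by auto. split.
 - intros H. apply win_rev in H. rewrite rev_involutive in H. exact H.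
 - apply win_rev. Qed.

Lemma wt_app : forall u w i b, weight_from u i (w ++ [b]) = weight_from u i w * (if b then u (i + length w)%nat else 1 - u (i + length w)%nat).
Proof. intros u w; induction w as [|a w IH]; intros i b; simpl.
 - rewrite Nat.add_0_r. ring.
 - rewrite IH. replace (S i + length w)%nat with (i + S (length w))%nat by lia. ring.
Qed.

Lemma wt_shift : forall u w i, weight_from u (S i) w = weight_from (fun t => u (S t)) i w.
Proof. intros u w; induction w as [|a w IH]; intros i; simpl; auto. rewrite IH. reflexivity. Qed.

Lemma wt_ext : forall u v w i, (forall t, u t = v t) -> weight_from u i w = weight_from v i w.
Proof. intros u v w; induction w as [|a w IH]; intros i H; simpl; auto. rewrite H, (IH (S i) H). reflexivity. Qed.

Lemma wt_rev : forall w u, weight_from u 0 (rev w) = weight_from (fun t => u (length w - 1 - t)%nat) 0 w.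
Proof. induction w as [|b w IH]; intros u. reflexivity.
 simpl rev. rewrite wt_app, IH, length_rev. simpl weight_from. rewrite wt_shift.
 rewrite (wt_ext (fun t => u (length (b :: w) - 1 - S t)%nat) (fun t => u (length w - 1 - t)%nat)) by (intros; simpl; f_equal; lia).
 simpl (0 + length w)%nat. rewrite !Nat.sub_0_r. ring.
Qed.

Definition Sg (k : nat) (v : nat -> R) (L m c : nat) : R :=
  sumL (fun w => if gs k c w then 0 else weight_from v m w) L.

Lemma Sg_0 : forall k v m c, Sg k v 0 m c = 1.
Proof. intros. unfold Sg. rewrite sumL_0. reflexivity. Qed.

Lemma Sg_S : forall k v L m c, Sg k v (S L) m c = v m * Sg k v L (S m) 0 + (if Nat.leb k (S c) then 0 else (1 - v m) * Sg k v L (S m) (S c)).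
Proof. intros. unfold Sg. rewrite sumL_S. f_equal.
 - rewrite <- sumL_scal. apply sumL_ext. intros w _. simpl. destruct (gs k 0 w); ring.
 - destruct (Nat.leb k (S c)) eqn:E.
   + transitivity (sumL (fun _ => 0) L); [|apply sumL_zero]. apply sumL_ext. intros w _. simpl. rewrite E. reflexivity.
   + rewrite <- sumL_scal. apply sumL_ext. intros w _. simpl. rewrite E. destruct (gs k (S c) w); ring.
Qed.

Lemma Sg_one : forall k v L m c, (c + L < k)%nat -> Sg k v L m c = 1.
Proof. intros k v L. induction L; intros m c H. apply Sg_0. rewrite Sg_S.
 destruct (Nat.leb_spec k (S c)); [lia|]. rewrite !IHL by lia. ring. Qed.

Lemma Sg_zero : forall k v L m c, (k - c <= L)%nat -> (c < k)%nat -> (forall s, (s < k - c)%nat -> v (m + s)%nat = 0) -> Sg k v L m c = 0.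
Proof. intros k v L. induction L; intros m c H1 H2 H. lia. rewrite Sg_S.
 assert (Hv : v m = 0) by (rewrite <- (Nat.add_0_r m); apply H; lia). rewrite Hv.
 destruct (Nat.leb k (S c)) eqn:E. ring.
 apply Nat.leb_gt in E.
 rewrite (IHL (S m) (S c)); [ring| lia | lia | ]. intros s Hs. replace (S m + s)%nat with (m + S s)%nat by lia. apply H; lia.
Qed.

Fixpoint rho (Q lam : R) (j : nat) : R :=
  match j with O => 0 | S j' => (1 - Q) * lam ^ j' + Q * rho Q lam j' end.

Lemma rho_id : forall Q lam j, (lam - Q) * rho Q lam j = (1 - Q) * (lam ^ j - Q ^ j).
Proof. intros Q lam j; induction j; simpl. ring.
 replace ((lam - Q) * ((1 - Q) * lam ^ j + Q * rho Q lam j)) with ((1-Q)*lam^j*(lam-Q) + Q*((lam - Q) * rho Q lam j)) by ring.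
 rewrite IHj. ring. Qed.

Lemma rho_diag : forall Q j, rho Q Q (S j) = (1 - Q) * INR (S j) * Q ^ j.
Proof. intros Q j; induction j. simpl. ring.
 change (rho Q Q (S (S j))) with ((1-Q)*Q^(S j) + Q * rho Q Q (S j)). rewrite IHj.
 rewrite !S_INR. simpl. ring. Qed.

Lemma rho_step : forall Q lam j, 0 <= Q <= 1 -> lam * rho Q lam j <= rho Q lam (S j).
Proof. intros Q lam j HQ; induction j. simpl. nra.
 simpl in *. nra. Qed.

Lemma rho_chain : forall Q lam, 0 <= Q <= 1 -> 0 <= lam -> forall d j, lam ^ d * rho Q lam j <= rho Q lam (j + d).
Proof. intros Q lam HQ Hl d; induction d; intros j.
 - rewrite Nat.add_0_r. simpl. lra.
 - replace (j + S d)%nat with (S j + d)%nat by lia.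
   apply Rle_trans with (lam ^ d * rho Q lam (S j)); [|apply IHd].
   change (lam ^ S d) with (lam * lam ^ d).
   replace (lam * lam ^ d * rho Q lam j) with (lam ^ d * (lam * rho Q lam j)) by ring.
   apply Rmult_le_compat_l. apply pow_le; auto. apply rho_step; auto. Qed.

Lemma rho_one : forall lam j, rho 1 lam j = 0.
Proof. intros lam j; induction j; simpl; [ring| rewrite IHj; ring]. Qed.

Fixpoint T (a b : R) (j : nat) : R :=
  match j with O => 0 | S j' => a ^ j' + b * T a b j' end.

Lemma T_id : forall a b j, (a - b) * T a b j = a ^ j - b ^ j.
Proof. intros a b j; induction j; simpl. ring.
 replace ((a - b) * (a ^ j + b * T a b j)) with ((a-b)*a^j + b*((a - b) * T a b j)) by ring.
 rewrite IHj. ring. Qed.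

Lemma T_lb : forall a b j, 0 <= b <= a -> b * T a b j >= INR j * b ^ j.
Proof. intros a b j H; induction j. simpl. lra.
 rewrite S_INR. simpl.
 assert (b ^ j <= a ^ j) by (apply pow_incr; lra).
 assert (0 <= b ^ j) by (apply pow_le; lra).
 nra. Qed.

Lemma g_max : forall k y, (1 <= k)%nat -> 0 <= y -> y * (INR k + 1) < INR k ->
  y ^ k - y ^ S k < (INR k / (INR k + 1)) ^ k - (INR k / (INR k + 1)) ^ S k.
Proof. intros k y Hk Hy Hyc.
 set (K := INR k) in *. assert (HK : 1 <= K) by (unfold K; apply (le_INR 1); lia).
 set (c := K / (K + 1)).
 assert (Hc : c * (K + 1) = K) by (unfold c; field; lra).
 assert (Hyc' : y < c) by nra.
 assert (Hc0 : 0 < c) by nra.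
 assert (Hclt : c < 1) by nra.
 assert (Hid : c ^ k - c ^ S k - (y ^ k - y ^ S k) = (c - y) * ((1 - c) * T c y k - y ^ k)).
 { replace ((c - y) * ((1 - c) * T c y k - y ^ k)) with ((1 - c) * ((c - y) * T c y k) - (c - y) * y ^ k) by ring.
   rewrite T_id. simpl. ring. }
 assert (Hpos : 0 < (1 - c) * T c y k - y ^ k).
 { destruct (Rle_lt_or_eq_dec 0 y Hy) as [Hy0|Hy0].
   - assert (H1 := T_lb c y k ltac:(lra)). fold K in H1.
     assert (Hyk : 0 < y ^ k) by (apply pow_lt; lra).
     assert (H2 : y * ((1 - c) * T c y k - y ^ k) > 0).
     { assert (Hc1 : (1 - c) * K = c) by nra.
       assert (H3 : (1 - c) * (y * T c y k) >= (1 - c) * (K * y ^ k)) by (apply Rmult_ge_compat_l; lra).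
       assert (H4 : 0 < (c - y) * y ^ k) by (apply Rmult_lt_0_compat; lra).
       replace ((1 - c) * (K * y ^ k)) with (c * y ^ k) in H3 by (rewrite <- Rmult_assoc, Hc1; ring).
       nra. }
     nra.
   - subst y. destruct k as [|k']. lia. simpl.
     assert (0 < c ^ k') by (apply pow_lt; lra). nra. }
 assert (0 < (c - y) * ((1 - c) * T c y k - y ^ k)) by (apply Rmult_lt_0_compat; lra).
 lra. Qed.

Theorem mainTheorem4 (k n : nat) (u : nat -> R) (f : R -> R)
  (hk : (1 <= k)%nat)
  (hf_range : forall x, 0 <= x <= 1 -> 0 <= f x <= 1)
  (hf_dec : forall x y, 0 <= x -> x < y -> y <= 1 -> f y < f x)
  (hf_eq : forall x, 0 <= x <= 1 -> f x ^ k - f x ^ (S k) = x ^ k - x ^ (S k))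
  (hu_range : forall i, (i < n)%nat -> 0 <= u i <= 1)
  (hu_mono : forall i, (S i < n)%nat -> u (S i) <= u i) :
  prob_no_kgap k n u <= gap_bound f k n u.
Proof.
  set (v := fun t => u (n - 1 - t)%nat).
  set (B := fun o => fold_right Rmult 1 (map (fun i => f (1 - u i)) (seq 0 (S n - (o + k))))).
  set (Qo := fun o => 1 - u (n - o - k)%nat).
  assert (fnoninc : forall x y, 0 <= x -> x <= y -> y <= 1 -> f y <= f x).
  { intros x y H1 H2 H3. destruct (Rle_lt_or_eq_dec x y H2). left; apply hf_dec; auto. subst; lra. }
  assert (udec : forall i j, (i <= j)%nat -> (j < n)%nat -> u j <= u i).
  { intros i j; induction j; intros H1 H2. replace i with 0%nat by lia; lra.
    destruct (Nat.eq_dec i (S j)). subst; lra.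
    apply Rle_trans with (u j). apply hu_mono; lia. apply IHj; lia. }
  assert (fold_app : forall l1 l2, fold_right Rmult 1 (l1 ++ l2) = fold_right Rmult 1 l1 * fold_right Rmult 1 l2).
  { induction l1; intros; simpl; [ring| rewrite IHl1; ring]. }
  assert (Bpos : forall o, 0 <= B o).
  { intros o. unfold B. assert (H : forall l, (forall i, In i l -> (i < n)%nat) -> 0 <= fold_right Rmult 1 (map (fun i => f (1 - u i)) l)).
    { induction l; intros Hl; simpl. lra. apply Rmult_le_pos. apply hf_range.
      specialize (hu_range a (Hl a (or_introl eq_refl))). lra. apply IHl. intros; apply Hl; right; auto. }
    apply H. intros i Hi. apply in_seq in Hi. lia. }
  assert (Bdec : forall p, (p + k <= n)%nat -> B p = B (S p) * f (1 - u (n - p - k)%nat)).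
  { intros p Hp. unfold B. replace (S n - (p + k))%nat with (S (S n - (S p + k))) by lia.
    rewrite seq_S, map_app, fold_app. simpl. replace (n - p - k)%nat with (n - (p + k))%nat by lia. ring. }
  assert (Bone : forall p, (n < p + k)%nat -> B p = 1).
  { intros p Hp. unfold B. replace (S n - (p + k))%nat with 0%nat by lia. reflexivity. }
  assert (HQo : forall o, (o + k <= n)%nat -> 0 <= Qo o <= 1).
  { intros o Ho. unfold Qo. specialize (hu_range (n - o - k)%nat ltac:(lia)). lra. }
  assert (Bstep : forall o p, (o + k <= n)%nat -> (o <= p)%nat -> f (Qo o) * B (S p) <= B p).
  { intros o p Ho Hp. assert (Hl := hf_range _ (HQo o Ho)).
    destruct (le_lt_dec (p + k) n).
    - rewrite (Bdec p) by lia.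
      assert (Hf : f (Qo o) <= f (1 - u (n - p - k)%nat)).
      { apply fnoninc. specialize (hu_range (n - p - k)%nat ltac:(lia)); lra.
        unfold Qo. assert (u (n - o - k)%nat <= u (n - p - k)%nat) by (apply udec; lia). lra.
        specialize (HQo o Ho). lra. }
      rewrite Rmult_comm. apply Rmult_le_compat_l. apply Bpos. exact Hf.
    - rewrite !Bone by lia. lra. }
  assert (Bchain : forall o j, (o + k <= n)%nat -> f (Qo o) ^ j * B (o + j)%nat <= B o).
  { intros o j Ho. assert (Hl := hf_range _ (HQo o Ho)). induction j.
    - rewrite Nat.add_0_r. simpl. lra.
    - apply Rle_trans with (f (Qo o) ^ j * B (o + j)%nat); [|exact IHj].
      change (f (Qo o) ^ S j) with (f (Qo o) * f (Qo o) ^ j).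
      rewrite Nat.add_succ_r.
      replace (f (Qo o) * f (Qo o) ^ j * B (S (o + j))) with (f (Qo o) ^ j * (f (Qo o) * B (S (o + j)))) by ring.
      apply Rmult_le_compat_l. apply pow_le; lra. apply Bstep; lia. }
  assert (fQ0 : forall Q, 0 <= Q <= 1 -> f Q = 0 -> Q = 1).
  { intros Q HQ H0. assert (E := hf_eq Q HQ). rewrite H0 in E. simpl in E.
    rewrite pow_i in E by lia. 
    assert (E2 : Q ^ k * (1 - Q) = 0) by (simpl in E; nra).
    destruct (Rmult_integral _ _ E2) as [E3|E3]; [|lra].
    assert (Q = 0). { destruct (Req_dec Q 0); auto. exfalso. apply (pow_nonzero Q k H E3). }
    subst Q. assert (H1 := hf_dec 0 1 ltac:(lra) ltac:(lra) ltac:(lra)). assert (H2 := hf_range 1 ltac:(lra)). lra. }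
  assert (FQ : forall Q, 0 <= Q <= 1 -> f Q = Q -> INR k * (1 - Q) <= Q).
  { intros Q HQ HfQ. destruct (Rle_lt_dec (INR k * (1 - Q)) Q) as [|Hlt]; auto. exfalso.
    assert (HK : 1 <= INR k) by (apply (le_INR 1); lia).
    set (c := INR k / (INR k + 1)).
    assert (Hc : c * (INR k + 1) = INR k) by (unfold c; field; lra).
    assert (HQc : Q < c) by nra.
    assert (Hc1 : c <= 1) by nra.
    assert (Hfc : f c < Q) by (rewrite <- HfQ; apply hf_dec; lra).
    assert (Hr := hf_range c ltac:(lra)).
    assert (Hg := g_max k (f c) hk ltac:(lra) ltac:(nra)).
    assert (He := hf_eq c ltac:(lra)). fold c in Hg. lra. }
  assert (Krho : forall Q, 0 <= Q <= 1 -> rho Q (f Q) k <= f Q ^ k).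
  { intros Q HQ. destruct (Req_dec (f Q) Q) as [HE|HE].
    - assert (H := FQ Q HQ HE). rewrite HE. destruct k as [|k']. lia.
      rewrite rho_diag. assert (0 <= Q ^ k') by (apply pow_le; lra).
      change (Q ^ S k') with (Q * Q ^ k').
      assert (0 <= (Q - INR (S k') * (1 - Q)) * Q ^ k') by (apply Rmult_le_pos; lra). nra.
    - assert (E1 := rho_id Q (f Q) k). assert (E2 := hf_eq Q HQ). simpl in E2.
      assert (H0 : (f Q - Q) * (rho Q (f Q) k - f Q ^ k) = 0).
      { rewrite Rmult_minus_distr_l, E1. nra. }
      destruct (Rmult_integral _ _ H0); [lra|]. lra. }
  assert (N1 : forall Q j, 0 <= Q <= 1 -> (j <= k)%nat -> rho Q (f Q) j <= f Q ^ j).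
  { intros Q j HQ Hj. assert (Hl := hf_range Q HQ).
    destruct (Rle_lt_or_eq_dec 0 (f Q) (proj1 Hl)) as [Hp|H0].
    - assert (H := rho_chain Q (f Q) HQ (proj1 Hl) (k - j) j).
      replace (j + (k - j))%nat with k in H by lia.
      assert (H2 := Krho Q HQ).
      assert (H3 : f Q ^ k = f Q ^ (k - j) * f Q ^ j) by (rewrite <- pow_add; f_equal; lia).
      apply Rmult_le_reg_l with (f Q ^ (k - j)). apply pow_lt; auto. lra.
    - assert (Q = 1) by (apply fQ0; auto). subst Q. rewrite rho_one. apply pow_le. lra. }
  assert (inv : forall L, (forall m c, (m + L = n)%nat -> (c < k)%nat -> (c <= m)%nat -> (m - c + k <= n)%nat ->
       f (Qo (m - c)%nat) ^ k * Sg k v L m c <= rho (Qo (m - c)%nat) (f (Qo (m - c)%nat)) (k - c) * B (m - c)%nat)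
     /\ (forall m, (m + L = n)%nat -> Sg k v L m 0 <= B m)).
  { induction L as [|L [IHa IHb]].
    - split. intros; lia. intros m Hm. rewrite Sg_0, Bone by lia. lra.
    - assert (Ha : forall m c, (m + S L = n)%nat -> (c < k)%nat -> (c <= m)%nat -> (m - c + k <= n)%nat ->
         f (Qo (m - c)%nat) ^ k * Sg k v (S L) m c <= rho (Qo (m - c)%nat) (f (Qo (m - c)%nat)) (k - c) * B (m - c)%nat).
      { intros m c Hm Hc Hcm Ho.
        set (o := (m - c)%nat) in *.
        assert (HQ : 0 <= Qo o <= 1) by (apply HQo; lia).
        set (Q := Qo o) in *. set (lam := f Q) in *.
        assert (Hl : 0 <= lam <= 1) by (apply hf_range; auto).
        assert (Hvm : 0 <= v m <= 1) by (unfold v; apply hu_range; lia).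
        assert (HqQ : Q <= 1 - v m).
        { unfold Q, Qo, v. assert (u (n-1-m)%nat <= u (n - o - k)%nat) by (apply udec; unfold o; lia). lra. }
        set (j := (k - S c)%nat).
        assert (Hkc : (k - c)%nat = S j) by (unfold j; lia).
        rewrite Hkc. simpl rho.
        assert (Hrj : rho Q lam j <= lam ^ j) by (apply N1; auto; unfold j; lia).
        assert (Hpow : lam ^ k = lam ^ j * lam ^ (S c)) by (rewrite <- pow_add; f_equal; unfold j; lia).
        assert (H1 : Sg k v L (S m) 0 <= B (S m)) by (apply IHb; lia).
        assert (H1' : lam ^ (S c) * B (S m) <= B o).
        { replace (S m) with (o + S c)%nat by (unfold o; lia). apply Bchain. lia. }
        assert (Hbo := Bpos o). assert (Hbs := Bpos (S m)).
        assert (Hlj : 0 <= lam ^ j) by (apply pow_le; lra).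
        assert (Hlc : 0 <= lam ^ S c) by (apply pow_le; lra).
        assert (T1 : lam ^ k * (v m * Sg k v L (S m) 0) <= v m * lam ^ j * B o).
        { rewrite Hpow.
          replace (lam ^ j * lam ^ S c * (v m * Sg k v L (S m) 0)) with ((v m * lam ^ j) * (lam ^ S c * Sg k v L (S m) 0)) by ring.
          apply Rmult_le_compat_l. apply Rmult_le_pos; lra.
          apply Rle_trans with (lam ^ S c * B (S m)); [|exact H1'].
          apply Rmult_le_compat_l; lra. }
        assert (T2 : lam ^ k * (if Nat.leb k (S c) then 0 else (1 - v m) * Sg k v L (S m) (S c)) <= (1 - v m) * rho Q lam j * B o).
        { destruct (Nat.leb_spec k (S c)).
          - replace j with 0%nat by (unfold j; lia). simpl. lra.
          - assert (H2 := IHa (S m) (S c) ltac:(lia) ltac:(lia) ltac:(lia) ltac:(unfold o in Ho; lia)).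
            replace (S m - S c)%nat with o in H2 by (unfold o; lia).
            fold j Q lam in H2.
            replace (lam ^ k * ((1 - v m) * Sg k v L (S m) (S c))) with ((1 - v m) * (lam ^ k * Sg k v L (S m) (S c))) by ring.
            rewrite Rmult_assoc. apply Rmult_le_compat_l; lra. }
        rewrite Sg_S. rewrite Rmult_plus_distr_l.
        assert (Hprod : 0 <= (1 - v m - Q) * (lam ^ j - rho Q lam j) * B o) by (apply Rmult_le_pos; [apply Rmult_le_pos|]; lra).
        nra. }
      split; [exact Ha|].
      intros m Hm. destruct (le_lt_dec (m + k) n) as [Hmk|Hmk].
      + assert (H := Ha m 0%nat Hm ltac:(lia) ltac:(lia) ltac:(rewrite Nat.sub_0_r; lia)).
        rewrite !Nat.sub_0_r in H.
        assert (HQ := HQo m Hmk).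
        assert (Kr := Krho (Qo m) HQ). assert (Hl := hf_range _ HQ).
        assert (Hb := Bpos m).
        destruct (Rle_lt_or_eq_dec 0 (f (Qo m)) (proj1 Hl)) as [Hp|H0].
        * apply Rmult_le_reg_l with (f (Qo m) ^ k). apply pow_lt; auto.
          apply Rle_trans with (rho (Qo m) (f (Qo m)) k * B m); auto.
          apply Rmult_le_compat_r; auto.
        * assert (HQ1 : Qo m = 1) by (apply fQ0; auto).
          unfold Qo in HQ1.
          rewrite Sg_zero; auto; try lia.
          intros s Hs. unfold v. rewrite Nat.sub_0_r in Hs.
          assert (u (n - 1 - (m + s))%nat <= u (n - m - k)%nat) by (apply udec; lia).
          specialize (hu_range (n - 1 - (m + s))%nat ltac:(lia)). lra.
      + rewrite Sg_one by lia. rewrite Bone by lia. lra. }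
  assert (Hfin := proj2 (inv n) 0%nat ltac:(lia)).
  unfold prob_no_kgap.
  change (fold_right Rplus 0 (map (fun w => if kgapb k w then 0 else weight_from u 0 w) (bool_lists n)))
    with (sumL (fun w => if kgapb k w then 0 else weight_from u 0 w) n).
  rewrite sumL_rev.
  apply Rle_trans with (Sg k v n 0 0); [|exact Hfin].
  apply Req_le. unfold Sg. apply sumL_ext. intros w Hw.
  rewrite kgapb_rev, kgapb_gs by auto. rewrite wt_rev, Hw. reflexivity.
Qed.
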